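(* Fix $t>0$ and $D\ge1$. The following are equivalent: (a) for all finite $X,Y,Z\subset\mathbb{R}^D$, $d^t_{Mag}(X,Y)+d^t_{Mag}(Y,Z)\ge d^t_{Mag}(X,Z)$; (b) magnitude at scale $t$ is submodular on finite subsets of $\mathbb{R}^D$, i.e. $\mathrm{Mag}(tA)+\mathrm{Mag}(tB)\ge\mathrm{Mag}(t(A\cup B))+\mathrm{Mag}(t(A\cap B))$ for all finite $A,B\subset\mathbb{R}^D$. Moreover, the magnitude distance does not satisfy the triangle inequality in general: there exist $D$, $t>0$ and finite $X,Y,Z\subset\mathbb{R}^D$ with $d^t_{Mag}(X,Y)+d^t_{Mag}(Y,Z)<d^t_{Mag}(X,Z)$.
   Context: For a finite set $A\subset\mathbb{R}^D$ and $t>0$, the matrix $\zeta_{tA}(x,y)=\exp(-t\|x-y\|)$ ($x,y\in A$) is invertible and $\mathrm{Mag}(tA)=\mathbb{1}^\top\zeta_{tA}^{-1}\mathbb{1}$, with $\mathrm{Mag}(t\emptyset)=0$. The magnitude distance is $d^t_{Mag}(X,Y)=2\,\mathrm{Mag}(t(X\cup Y))-\mathrm{Mag}(tX)-\mathrm{Mag}(tY)$. *)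

(* Defs.v *)
From HB Require Import structures.
From mathcomp Require Import all_boot all_order all_algebra.
From mathcomp Require Import finmap.
From mathcomp Require Import all_classical all_reals all_analysis.
Set Implicit Arguments. Unset Strict Implicit. Unset Printing Implicit Defensive.
Import Order.TTheory GRing.Theory Num.Theory.
Local Open Scope ring_scope.

Definition edist (R : realType) (D : nat) (x y : 'rV[R]_D) : R :=
  Num.sqrt (\sum_(i < D) (x 0 i - y 0 i) ^+ 2).

Definition zeta_mx (R : realType) (D : nat) (t : R) (A : {fset 'rV[R]_D}) :
  'M[R]_(size (enum_fset A)) :=
  \matrix_(i, j) expR (- (t * edist (nth 0 (enum_fset A) i) (nth 0 (enum_fset A) j))).

(* Mag(tA) = 1^T zeta_{tA}^{-1} 1 ; equals 0 for A empty (empty sum) *)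
Definition Mag (R : realType) (D : nat) (t : R) (A : {fset 'rV[R]_D}) : R :=
  \sum_i \sum_j (invmx (zeta_mx t A)) i j.

Definition dMag (R : realType) (D : nat) (t : R) (X Y : {fset 'rV[R]_D}) : R :=
  2 * Mag t (X `|` Y)%fset - Mag t X - Mag t Y.

(* Main.v *)
Require Import Defs.
From HB Require Import structures.
From mathcomp Require Import all_boot all_order all_algebra.
From mathcomp Require Import finmap.
From mathcomp Require Import all_classical all_reals all_analysis.
Import Order.TTheory GRing.Theory Num.Theory.
Local Open Scope ring_scope.
From mathcomp Require Import ring lra.

Module Helpers.
Set Implicit Arguments. Unset Strict Implicit. Unset Printing Implicit Defensive.

Module GenM.
Section Gen.
Variables (R : realType) (D : nat) (t : R).
Local Notation pt := 'rV[R]_D.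

Definition kf (x y : pt) : R := expR (- (t * Defs.edist x y)).

Lemma edistC (x y : pt) : Defs.edist x y = Defs.edist y x.
Proof. rewrite /edist; congr Num.sqrt; apply: eq_bigr => i _; by rewrite -sqrrN opprB. Qed.

Lemma kfC x y : kf x y = kf y x.
Proof. by rewrite /kf edistC. Qed.

Lemma nth_in_fset (A : {fset pt}) (j : 'I_(size (enum_fset A))) :
  nth 0 (enum_fset A) j \in A.
Proof. have := mem_nth 0 (ltn_ord j). exact. Qed.

Lemma Mag_weight (A : {fset pt}) (w : pt -> R) :
  (forall v : pt -> R, (forall x, x \in A -> \sum_(y <- A) kf x y * v y = 0) ->
      forall y, y \in A -> v y = 0) ->
  (forall x, x \in A -> \sum_(y <- A) kf x y * w y = 1) ->
  Mag t A = \sum_(y <- A) w y.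
Proof.
move=> ker wgt.
have us : uniq (enum_fset A) by exact: fset_uniq.
have bigS : forall F : pt -> R, \sum_(y <- A) F y = \sum_(i < size (enum_fset A)) F (nth 0 (enum_fset A) i).
  by move=> F; rewrite (big_nth 0) big_mkord.
have Zij : forall i j, zeta_mx t A i j = kf (nth 0 (enum_fset A) i) (nth 0 (enum_fset A) j).
  by move=> i j; rewrite /zeta_mx mxE.
have Zu : zeta_mx t A \in unitmx.
  rewrite unitmxE unitfE; apply/negP => /det0P [v vn0 vZ].
  pose V y := \sum_(i < size (enum_fset A)) (if nth 0 (enum_fset A) i == y then v 0 i else 0).
  have VE : forall j : 'I_(size (enum_fset A)), V (nth 0 (enum_fset A) j) = v 0 j.
    move=> j; rewrite /V (bigD1 j) //= eqxx big1 ?addr0 // => i ij.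
    rewrite nth_uniq // ifF //; exact: negbTE ij.
  have : forall j : 'I_(size (enum_fset A)), v 0 j = 0.
    move=> j; rewrite -VE; apply: ker; last exact: nth_in_fset.
    move=> x /(nthP 0) [i ilt <-].
    rewrite bigS.
    transitivity ((v *m zeta_mx t A) 0 (Ordinal ilt)); last by rewrite vZ mxE.
    rewrite mxE; apply: eq_bigr => k _; rewrite VE Zij mulrC kfC //.
  move=> v0; move/eqP: vn0; apply; apply/rowP => j; by rewrite v0 mxE.
pose W := \col_(i < size (enum_fset A)) w (nth 0 (enum_fset A) i).
have ZW : zeta_mx t A *m W = const_mx 1.
  apply/colP => i; rewrite !mxE -(wgt (nth 0 (enum_fset A) i)); last exact: nth_in_fset.
  rewrite bigS; apply: eq_bigr => k _; by rewrite Zij mxE.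
have : W = invmx (zeta_mx t A) *m const_mx 1 by rewrite -ZW mulKmx.
move/(congr1 (fun M : 'cV[R]_(size (enum_fset A)) => \sum_i M i 0)).
rewrite /Mag bigS => E.
transitivity (\sum_i W i 0); last by apply: eq_bigr => i _; rewrite mxE.
rewrite E; apply: eq_bigr => i _; rewrite mxE; apply: eq_bigr => j _; by rewrite mxE mulr1.
Qed.

Lemma Mag_list (A : {fset pt}) (l : seq pt) (w : pt -> R) :
  uniq l -> A =i l ->
  (forall v : pt -> R, (forall x, x \in l -> \sum_(y <- l) kf x y * v y = 0) ->
      forall y, y \in l -> v y = 0) ->
  (forall x, x \in l -> \sum_(y <- l) kf x y * w y = 1) ->
  Mag t A = \sum_(y <- l) w y.
Proof.
move=> ul Al ker wgt.
have P : perm_eq (enum_fset A) l by apply: uniq_perm => //; exact: fset_uniq.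
rewrite (Mag_weight (w := w)) ?(perm_big _ P) //.
  move=> v h y yA; apply: ker; last by rewrite -Al.
  by move=> x xl; rewrite -(perm_big _ P); apply: h; rewrite Al.
by move=> x xA; rewrite (perm_big _ P); apply: wgt; rewrite -Al.
Qed.

Lemma kf_id x : kf x x = 1.
Proof.
rewrite /kf /Defs.edist (eq_bigr (fun _ => 0)); last by move=> i _; rewrite subrr expr0n.
by rewrite big1_eq sqrtr0 mulr0 oppr0 expR0.
Qed.

End Gen.

End GenM.
Export GenM.

Module CexM.
Section Abs.
Variables (R : realType) (T : eqType) (k : T -> T -> R).
Hypothesis kC : forall x y, k x y = k y x.
Hypothesis k1 : forall x, k x x = 1.

Lemma tri_abs x y z (w1 w2 w3 : R) : (x == y) = false -> (x == z) = false -> (y == z) = false ->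
  k x y = 1/16 -> k x z = 1/32 -> k y z = 1/8 ->
  w1 = 616/669 -> w2 = 186/223 -> w3 = 580/669 ->
  [/\ (forall v : T -> R, (forall u, u \in [:: x; y; z] -> \sum_(j <- [:: x; y; z]) k u j * v j = 0) ->
     forall j, j \in [:: x; y; z] -> v j = 0),
  (forall u, u \in [:: x; y; z] -> \sum_(j <- [:: x; y; z]) k u j *
     (if j == x then w1 else if j == y then w2 else w3) = 1) &
  \sum_(j <- [:: x; y; z]) (if j == x then w1 else if j == y then w2 else w3) = 1754/669].
Proof.
move=> nxy nxz nyz kxy kxz kyz h1 h2 h3.
have kyx : k y x = 1/16 by rewrite kC.
have kzx : k z x = 1/32 by rewrite kC.
have kzy : k z y = 1/8 by rewrite kC.
have nyx : (y == x) = false by rewrite eq_sym.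
have nzx : (z == x) = false by rewrite eq_sym.
have nzy : (z == y) = false by rewrite eq_sym.
split.
- move=> v h.
  have := h x; rewrite !inE eqxx ?orbT => /(_ isT) e1.
  have := h y; rewrite !inE eqxx ?orbT => /(_ isT) e2.
  have := h z; rewrite !inE eqxx ?orbT => /(_ isT) e3.
  rewrite !big_cons !big_nil !k1 kxy kxz kyz kyx kzx kzy in e1 e2 e3.
  move=> j; rewrite !inE => /or3P [] /eqP ->; clear -e1 e2 e3; lra.
- move=> u; rewrite !inE => /or3P [] /eqP ->; rewrite !big_cons !big_nil !k1 ?kxy ?kxz ?kyz ?kyx ?kzx ?kzy
    !eqxx ?nxy ?nxz ?nyz ?nyx ?nzx ?nzy; cbv beta iota; rewrite h1 h2 h3; by field.
- rewrite !big_cons !big_nil !eqxx nyx nzx nzy; cbv beta iota; rewrite h1 h2 h3; by field.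
Qed.

Lemma quad_abs a b c d (w1 w2 w3 w4 : R) : (a == b) = false -> (a == c) = false -> (a == d) = false ->
  (b == c) = false -> (b == d) = false -> (c == d) = false ->
  k a b = 1/16 -> k a c = 1/256 -> k a d = 1/32 -> k b c = 1/16 -> k b d = 1/8 -> k c d = 1/32 ->
  w1 = 4928/5349 -> w2 = 4168/5349 -> w3 = 4928/5349 -> w4 = 4520/5349 ->
  [/\ (forall v : T -> R, (forall u, u \in [:: a; b; c; d] -> \sum_(j <- [:: a; b; c; d]) k u j * v j = 0) ->
     forall j, j \in [:: a; b; c; d] -> v j = 0),
  (forall u, u \in [:: a; b; c; d] -> \sum_(j <- [:: a; b; c; d]) k u j *
     (if j == a then w1 else if j == b then w2 else if j == c then w3 else w4) = 1) &
  \sum_(j <- [:: a; b; c; d]) (if j == a then w1 else if j == b then w2 else if j == c then w3 else w4)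
     = 18544/5349].
Proof.
move=> nab nac nad nbc nbd ncd kab kac kad kbc kbd kcd h1 h2 h3 h4.
have kba : k b a = 1/16 by rewrite kC.
have kca : k c a = 1/256 by rewrite kC.
have kda : k d a = 1/32 by rewrite kC.
have kcb : k c b = 1/16 by rewrite kC.
have kdb : k d b = 1/8 by rewrite kC.
have kdc : k d c = 1/32 by rewrite kC.
have nba : (b == a) = false by rewrite eq_sym.
have nca : (c == a) = false by rewrite eq_sym.
have nda : (d == a) = false by rewrite eq_sym.
have ncb : (c == b) = false by rewrite eq_sym.
have ndb : (d == b) = false by rewrite eq_sym.
have ndc : (d == c) = false by rewrite eq_sym.
split.
- move=> v h.
  have := h a; rewrite !inE eqxx ?orbT => /(_ isT) e1.
  have := h b; rewrite !inE eqxx ?orbT => /(_ isT) e2.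
  have := h c; rewrite !inE eqxx ?orbT => /(_ isT) e3.
  have := h d; rewrite !inE eqxx ?orbT => /(_ isT) e4.
  rewrite !big_cons !big_nil !k1 kab kac kad kbc kbd kcd kba kca kda kcb kdb kdc in e1 e2 e3 e4.
  move=> j; rewrite !inE => /or4P [] /eqP ->; clear -e1 e2 e3 e4; lra.
- move=> u; rewrite !inE => /or4P [] /eqP ->; rewrite !big_cons !big_nil !k1
    ?kab ?kac ?kad ?kbc ?kbd ?kcd ?kba ?kca ?kda ?kcb ?kdb ?kdc
    !eqxx ?nab ?nac ?nad ?nbc ?nbd ?ncd ?nba ?nca ?nda ?ncb ?ndb ?ndc; cbv beta iota;
    rewrite h1 h2 h3 h4; by field.
- rewrite !big_cons !big_nil !eqxx nba nca nda ncb ndb ndc; cbv beta iota; rewrite h1 h2 h3 h4; by field.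
Qed.

Lemma pair_abs x y : (x == y) = false -> k x y = 1/8 ->
  [/\ (forall v : T -> R, (forall u, u \in [:: x; y] -> \sum_(j <- [:: x; y]) k u j * v j = 0) ->
     forall j, j \in [:: x; y] -> v j = 0),
  (forall u, u \in [:: x; y] -> \sum_(j <- [:: x; y]) k u j * (8/9) = 1) &
  \sum_(j <- [:: x; y]) (8/9 : R) = 16/9].
Proof.
move=> nxy kxy.
have kyx : k y x = 1/8 by rewrite kC.
split.
- move=> v h.
  have := h x; rewrite !inE eqxx ?orbT => /(_ isT) e1.
  have := h y; rewrite !inE eqxx ?orbT => /(_ isT) e2.
  rewrite !big_cons !big_nil !k1 kxy kyx in e1 e2.
  move=> j; rewrite !inE => /orP [] /eqP ->; lra.
- move=> u; rewrite !inE => /orP [] /eqP ->; rewrite !big_cons !big_nil !k1 ?kxy ?kyx; lra.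
- rewrite !big_cons !big_nil; lra.
Qed.
End Abs.

Section Cex.
Variables (R : realType) (n : nat) (t : R).
Hypothesis ht : 0 < t.
Local Notation pt := 'rV[R]_(n.+2).

Definition sc : R := ln 2 / t.
Lemma sc_gt0 : 0 < sc.
Proof. by rewrite /sc divr_gt0 // ln_gt0 // ltr1n. Qed.

Definition P (a b : R) : pt :=
  \row_(i < n.+2) (if (i == 0%N :> nat) then a * sc else if (i == 1%N :> nat) then b * sc else 0).

Lemma edistP a b c d : Defs.edist (P a b) (P c d) = sc * Num.sqrt ((a-c)^+2 + (b-d)^+2).
Proof.
rewrite /Defs.edist !big_ord_recl big1 ?addr0; last first.
  by move=> i _; rewrite !mxE /= subrr expr0n.
rewrite !mxE /=.
have -> : (a * sc - c * sc) ^+ 2 + (b * sc - d * sc) ^+ 2 = sc ^+ 2 * ((a - c) ^+ 2 + (b - d) ^+ 2).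
  by ring.
rewrite sqrtrM ?sqrtr_sqr ?ger0_norm ?sqr_ge0 //; exact: ltW sc_gt0.
Qed.

Lemma kfP a b c d (m : nat) : (a-c)^+2 + (b-d)^+2 = (m%:R)^+2 ->
  kf t (P a b) (P c d) = ((2:R) ^+ m)^-1.
Proof.
move=> h; rewrite /kf edistP h sqrtr_sqr ger0_norm ?ler0n //.
have -> : t * (ln 2 / t * m%:R) = m%:R * ln 2 by field; rewrite gt_eqF.
rewrite expRN expRM_natl lnK //.
by rewrite posrE ltr0n.
Qed.

Lemma P_inj a b c d : P a b = P c d -> a = c /\ b = d.
Proof.
move=> e.
have e0 := congr1 (fun M : pt => M 0 (@Ordinal n.+2 0 isT)) e.
have e1 := congr1 (fun M : pt => M 0 (@Ordinal n.+2 1 isT)) e.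
move: e0 e1; rewrite !mxE /= => e0 e1.
have sc0 : sc != 0 by rewrite gt_eqF // sc_gt0.
by split; apply: (mulIf sc0).
Qed.

Definition p1 := P 0 0.
Definition p2 := P 0 4.
Definition p3 := P 0 8.
Definition p4 := P 3 4.

Lemma neqP a b c d : (a != c) || (b != d) -> P a b != P c d.
Proof. by case/orP => /eqP h; apply/eqP => /P_inj []. Qed.

Lemma n12 : (p1 == p2) = false. Proof. by apply/negbTE/neqP; apply/orP; right; apply/eqP; lra. Qed.
Lemma n13 : (p1 == p3) = false. Proof. by apply/negbTE/neqP; apply/orP; right; apply/eqP; lra. Qed.
Lemma n14 : (p1 == p4) = false. Proof. by apply/negbTE/neqP; apply/orP; left; apply/eqP; lra. Qed.
Lemma n23 : (p2 == p3) = false. Proof. by apply/negbTE/neqP; apply/orP; right; apply/eqP; lra. Qed.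
Lemma n24 : (p2 == p4) = false. Proof. by apply/negbTE/neqP; apply/orP; left; apply/eqP; lra. Qed.
Lemma n34 : (p3 == p4) = false. Proof. by apply/negbTE/neqP; apply/orP; left; apply/eqP; lra. Qed.
Definition nE := (n12, n13, n14, n23, n24, n34, (eq_sym p2 p1), (eq_sym p3 p1), (eq_sym p4 p1),
  (eq_sym p3 p2), (eq_sym p4 p2), (eq_sym p4 p3)).

Lemma k12 : kf t p1 p2 = 1/16.
Proof. by rewrite (@kfP _ _ _ _ 4); [field | ring]. Qed.
Lemma k13 : kf t p1 p3 = 1/256.
Proof. by rewrite (@kfP _ _ _ _ 8); [field | ring]. Qed.
Lemma k14 : kf t p1 p4 = 1/32.
Proof. by rewrite (@kfP _ _ _ _ 5); [field | ring]. Qed.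
Lemma k23 : kf t p2 p3 = 1/16.
Proof. by rewrite (@kfP _ _ _ _ 4); [field | ring]. Qed.
Lemma k24 : kf t p2 p4 = 1/8.
Proof. by rewrite (@kfP _ _ _ _ 3); [field | ring]. Qed.
Lemma k34 : kf t p3 p4 = 1/32.
Proof. by rewrite (@kfP _ _ _ _ 5); [field | ring]. Qed.
Definition kE := (kf_id, k12, k13, k14, k23, k24, k34, kfC t p2 p1, kfC t p3 p1, kfC t p4 p1,
  kfC t p3 p2, kfC t p4 p2, kfC t p4 p3).


Ltac memtac := let x := fresh "x" in move=> x; rewrite !inE;
  (have [->|/negbTE ->] := eqVneq x p1; rewrite ?nE ?eqxx //=);
  (have [->|/negbTE ->] := eqVneq x p2; rewrite ?nE ?eqxx //=);
  (have [->|/negbTE ->] := eqVneq x p3; rewrite ?nE ?eqxx //=);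
  (have [->|/negbTE ->] := eqVneq x p4; rewrite ?nE ?eqxx //=).


Lemma MA : Mag t [fset p1; p2; p4]%fset = 1754/669.
Proof.
have [K W S] := tri_abs (kfC t) (@kf_id _ _ t) n12 n14 n24 k12 k14 k24 erefl erefl erefl.
rewrite (@Mag_list _ _ t _ [:: p1; p2; p4] _ _ _ K W) //.
- by rewrite /= !inE n12 n14 n24.
- by move=> x; rewrite !inE !orbA.
Qed.

Lemma MB : Mag t [fset p2; p3; p4]%fset = 1754/669.
Proof.
have n32 : (p3 == p2) = false by rewrite eq_sym n23.
have k32 : kf t p3 p2 = 1/16 by rewrite kfC k23.
have [K W S] := tri_abs (kfC t) (@kf_id _ _ t) n32 n34 n24 k32 k34 k24 erefl erefl erefl.
rewrite (@Mag_list _ _ t _ [:: p3; p2; p4] _ _ _ K W) //.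
- by rewrite /= !inE n32 n34 n24.
- by move=> x; rewrite !inE; case: (x == p2); case: (x == p3); case: (x == p4).
Qed.

Lemma MU : Mag t ([fset p1; p2; p4] `|` [fset p2; p3; p4])%fset = 18544/5349.
Proof.
have [K W S] := quad_abs (kfC t) (@kf_id _ _ t) n12 n13 n14 n23 n24 n34 k12 k13 k14 k23 k24 k34
   erefl erefl erefl erefl.
rewrite (@Mag_list _ _ t _ [:: p1; p2; p3; p4] _ _ _ K W) //.
- by rewrite /= !inE n12 n13 n14 n23 n24 n34.
- by move=> x; rewrite !inE; case: (x == p1); case: (x == p2); case: (x == p3); case: (x == p4).
Qed.

Lemma MI : Mag t ([fset p1; p2; p4] `&` [fset p2; p3; p4])%fset = 16/9.
Proof.
have [K W S] := pair_abs (kfC t) (@kf_id _ _ t) n24 k24.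
rewrite (@Mag_list _ _ t _ [:: p2; p4] _ _ _ K W) //.
- by rewrite /= !inE n24.
- move=> x; rewrite !inE; case: (x =P p1) => [->|_]; first by rewrite n12 n13 n14.
  by case: (x == p2); case: (x == p3); case: (x == p4).
Qed.
End Cex.

Lemma cex (R : realType) (t : R) (D : nat) (ht : 0 < t) (hD : (2 <= D)%N) :
  exists A B : {fset 'rV[R]_D},
    Mag t A + Mag t B < Mag t (A `|` B)%fset + Mag t (A `&` B)%fset.
Proof.
case: D hD => [|[|n]] // _.
exists [fset p1 n t; p2 n t; p4 n t]%fset, [fset p2 n t; p3 n t; p4 n t]%fset.
rewrite MA // MB // MU // MI //; lra.
Qed.

End CexM.
Export CexM.

Module LineM.
Section Line.
Variables (R : realType) (t : R).
Hypothesis ht : 0 < t.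
Local Notation pt := 'rV[R]_1.
Local Notation k := (@kf R 1 t).

Definition c (x : pt) : R := x 0 0.

Lemma c_inj : injective c.
Proof. by move=> x y e; apply/rowP => i; rewrite ord1. Qed.

Lemma kE x y : k x y = expR (- (t * `|c x - c y|)).
Proof. by rewrite /kf /Defs.edist big_ord1 sqrtr_sqr. Qed.

Lemma k_gt0 x y : 0 < k x y.
Proof. exact: expR_gt0. Qed.

Lemma k_le1 x y : k x y <= 1.
Proof. by rewrite kE expR_le1 oppr_le0 mulr_ge0 // ltW. Qed.

Lemma k_lt1 x y : x != y -> k x y < 1.
Proof.
move=> xy; rewrite kE expR_lt1 oppr_lt0 mulr_gt0 // normr_gt0 subr_eq0.
by apply: contra xy => /eqP /c_inj ->.
Qed.

Lemma kM x y z : c x <= c y -> c y <= c z -> k x z = k x y * k y z.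
Proof.
move=> h1 h2; rewrite !kE -expRD; congr expR.
rewrite !ler0_norm ?subr_le0 //; last exact: le_trans h2.
ring.
Qed.

Lemma kM' x y z : c z <= c y -> c y <= c x -> k x z = k x y * k y z.
Proof. by move=> h1 h2; rewrite kfC (kM h1 h2) mulrC kfC (kfC t z). Qed.


Definition isLo (A : {fset pt}) (p : pt) (o : option pt) : Prop :=
  match o with
  | None => forall y, y \in A -> ~~ (c y < c p)
  | Some l => [/\ l \in A, c l < c p & forall y, y \in A -> c y < c p -> c y <= c l]
  end.

Definition isHi (A : {fset pt}) (p : pt) (o : option pt) : Prop :=
  match o with
  | None => forall y, y \in A -> ~~ (c p < c y)
  | Some r => [/\ r \in A, c p < c r & forall y, y \in A -> c p < c y -> c r <= c y]
  end.

Lemma exLo_seq (s : seq pt) (p : pt) : exists o : option pt,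
  match o with
  | None => forall y, y \in s -> ~~ (c y < c p)
  | Some l => [/\ l \in s, c l < c p & forall y, y \in s -> c y < c p -> c y <= c l]
  end.
Proof.
elim: s => [|x s [[l|] IH]]; first by exists None.
- case: IH => ls lp lmax.
  case: (ltP (c x) (c p)) => xp.
    case: (leP (c x) (c l)) => xl.
      exists (Some l); split; rewrite ?inE ?ls ?orbT //.
      by move=> y; rewrite inE => /orP [/eqP -> //|]; exact: lmax.
    exists (Some x); split; rewrite ?inE ?eqxx //.
    move=> y; rewrite inE => /orP [/eqP -> //|ys yp].
    by apply: le_trans (lmax _ ys yp) _; exact: ltW.
  exists (Some l); split; rewrite ?inE ?ls ?orbT //.
  move=> y; rewrite inE => /orP [/eqP -> xp'|]; last exact: lmax.
  by move: xp; rewrite leNgt xp'.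
- case: (ltP (c x) (c p)) => xp.
    exists (Some x); split; rewrite ?inE ?eqxx //.
    move=> y; rewrite inE => /orP [/eqP -> //|ys yp].
    by move: (IH y ys); rewrite yp.
  exists None => y; rewrite inE => /orP [/eqP ->|]; last exact: IH.
  by rewrite -leNgt.
Qed.

Lemma exHi_seq (s : seq pt) (p : pt) : exists o : option pt,
  match o with
  | None => forall y, y \in s -> ~~ (c p < c y)
  | Some r => [/\ r \in s, c p < c r & forall y, y \in s -> c p < c y -> c r <= c y]
  end.
Proof.
elim: s => [|x s [[l|] IH]]; first by exists None.
- case: IH => ls lp lmax.
  case: (ltP (c p) (c x)) => xp.
    case: (leP (c l) (c x)) => xl.
      exists (Some l); split; rewrite ?inE ?ls ?orbT //.
      by move=> y; rewrite inE => /orP [/eqP -> //|]; exact: lmax.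
    exists (Some x); split; rewrite ?inE ?eqxx //.
    move=> y; rewrite inE => /orP [/eqP -> //|ys yp].
    by apply: le_trans _ (lmax _ ys yp); exact: ltW.
  exists (Some l); split; rewrite ?inE ?ls ?orbT //.
  move=> y; rewrite inE => /orP [/eqP -> xp'|]; last exact: lmax.
  by move: xp; rewrite leNgt xp'.
- case: (ltP (c p) (c x)) => xp.
    exists (Some x); split; rewrite ?inE ?eqxx //.
    move=> y; rewrite inE => /orP [/eqP -> //|ys yp].
    by move: (IH y ys); rewrite yp.
  exists None => y; rewrite inE => /orP [/eqP ->|]; last exact: IH.
  by rewrite -leNgt.
Qed.

Lemma exLo A p : exists o, isLo A p o.
Proof. by have [oo h] := exLo_seq (enum_fset A) p; exists oo. Qed.

Lemma exHi A p : exists o, isHi A p o.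
Proof. by have [oo h] := exHi_seq (enum_fset A) p; exists oo. Qed.

Lemma exMax_seq (s : seq pt) : s != [::] -> exists2 m, m \in s & forall y, y \in s -> c y <= c m.
Proof.
elim: s => [//|x s IH] _.
case: (eqVneq s [::]) => [->|/IH [m ms mmax]].
  by exists x; rewrite ?inE ?eqxx // => y; rewrite inE => /eqP ->.
case: (leP (c x) (c m)) => xm.
  exists m; first by rewrite inE ms orbT.
  by move=> y; rewrite inE => /orP [/eqP ->|]; last exact: mmax.
exists x; first by rewrite inE eqxx.
move=> y; rewrite inE => /orP [/eqP ->//|ys].
by apply: le_trans (mmax _ ys) _; exact: ltW.
Qed.

Lemma exMax (A : {fset pt}) : A != fset0 -> exists2 m, m \in A & forall y, y \in A -> c y <= c m.
Proof.
move=> A0.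
have h : enum_fset A != [::].
  apply: contra A0 => /eqP e; apply/eqP/fsetP => x; rewrite inE.
  by apply/idP/idP => //; rewrite -[x \in A]/(x \in enum_fset A) e.
by have [m ms mmax] := exMax_seq h; exists m.
Qed.


Lemma ker_n (n : nat) (A : {fset pt}) : #|` A| = n ->
  forall v : pt -> R, (forall x, x \in A -> \sum_(y <- A) k x y * v y = 0) ->
  forall y, y \in A -> v y = 0.
Proof.
elim: n A => [|n IH] A cA v h.
  by move=> y; rewrite (cardfs0_eq cA) inE.
have A0 : A != fset0 by apply/eqP => e; move: cA; rewrite e cardfs0.
have [a aA amax] := exMax A0.
set A' := (A `\ a)%fset.
have cA' : #|` A'| = n by move: cA; rewrite (cardfsD1 a) aA add1n => -[].
have hS : forall x, x \in A -> \sum_(y <- A) k x y * v y = k x a * v a + \sum_(y <- A') k x y * v y.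
  by move=> x _; rewrite (big_fsetD1 a).
have va : v a = 0.
  case: (eqVneq A' fset0) => [A'0|A'n0].
    by have := h a aA; rewrite hS // A'0 big_seq_fset0 addr0 kf_id mul1r.
  have [b bA' bmax] := exMax A'n0.
  have [ba bA] : b != a /\ b \in A by move: bA'; rewrite in_fsetD1 => /andP.
  have cba : c b <= c a := amax b bA.
  have e1 := h a aA; have e2 := h b bA.
  rewrite hS // kf_id mul1r in e1; rewrite hS // in e2.
  have E : \sum_(y <- A') k a y * v y = k a b * \sum_(y <- A') k b y * v y.
    rewrite big_distrr /=; apply: eq_big_seq => y yA'; rewrite (@kM' a b y) ?mulrA //; exact: bmax.
  rewrite E in e1.
  have q1 : k a b < 1 by apply: k_lt1; rewrite eq_sym.
  have q0 : 0 < k a b := k_gt0 a b.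
  rewrite kfC in e2.
  set S := \sum_(y <- A') _ in e1 e2.
  have : v a * (1 - k a b ^+ 2) = 0 by rewrite expr2; nra.
  move/eqP; rewrite mulf_eq0 => /orP [/eqP //|].
  by rewrite subr_eq0 eq_sym sqrf_eq1 => /orP [] /eqP e; move: q1 q0; rewrite e; lra.
have hA' : forall x, x \in A' -> \sum_(y <- A') k x y * v y = 0.
  move=> x xA'; have xA : x \in A by move: xA'; rewrite in_fsetD1 => /andP [].
  by have := h x xA; rewrite hS // va mulr0 add0r.
move=> y yA; case: (eqVneq y a) => [->//|ya].
by apply: (IH A' cA' v hA'); rewrite in_fsetD1 ya.
Qed.

Lemma ker (A : {fset pt}) :
  forall v : pt -> R, (forall x, x \in A -> \sum_(y <- A) k x y * v y = 0) ->
  forall y, y \in A -> v y = 0.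
Proof. exact: (@ker_n _ A erefl). Qed.


Definition ql (o : option pt) (p : pt) : R := if o is Some l then k l p else 0.
Definition qr (p : pt) (o : option pt) : R := if o is Some r then k p r else 0.
Definition hq (a b : R) : R := 2 / (1 + a) + 2 / (1 + b) - 2 / (1 + a * b) - 1.

Lemma ql_ge0 o p : 0 <= ql o p.
Proof. by case: o => [l|] //=; exact: ltW (k_gt0 _ _). Qed.
Lemma qr_ge0 o p : 0 <= qr p o.
Proof. by case: o => [l|] //=; exact: ltW (k_gt0 _ _). Qed.
Lemma ql_le1 o p : ql o p <= 1.
Proof. by case: o => [l|] //=; exact: k_le1. Qed.
Lemma qr_le1 o p : qr p o <= 1.
Proof. by case: o => [l|] //=; exact: k_le1. Qed.

Lemma lt_or_gt (y p : pt) : y != p -> (c y < c p) || (c p < c y).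
Proof.
move=> yp; rewrite -neq_lt; apply: contra yp => /eqP e; apply/eqP; exact: c_inj.
Qed.

Lemma sumP (A : {fset pt}) p w lo hi : p \notin A -> isLo A p lo -> isHi A p hi ->
  (forall x, x \in A -> \sum_(y <- A) k x y * w y = 1) ->
  \sum_(y <- A) k p y * w y = (ql lo p + qr p hi) / (1 + ql lo p * qr p hi).
Proof.
move=> pA hlo hhi wgt.
have yp : forall y, y \in A -> y != p by move=> y yA; apply: contraNneq pA => <-.
case: lo hlo => [l|] hlo; case: hi hhi => [r|] hhi /=.
- case: hlo => lA lp lmax; case: hhi => rA pr rmin.
  set a := \sum_(y <- A | c y < c p) k l y * w y.
  set b := \sum_(y <- A | ~~ (c y < c p)) k r y * w y.
  have above : forall y, y \in A -> ~~ (c y < c p) -> c r <= c y.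
    move=> y yA /negbTE h; apply: rmin => //; by move: (lt_or_gt (yp y yA)); rewrite h.
  have klr : k l r = k l p * k p r by apply: kM; exact: ltW.
  have E1 : \sum_(y <- A) k p y * w y = k l p * a + k p r * b.
    rewrite (bigID (fun y => c y < c p)) /= /a /b !big_distrr /=; congr (_ + _).
      rewrite big_seq_cond [RHS]big_seq_cond; apply: eq_bigr => y /andP [yA yl].
      by rewrite mulrA (kfC t l) -kM' // ?lmax // ltW.
    rewrite big_seq_cond [RHS]big_seq_cond; apply: eq_bigr => y /andP [yA yl].
    by rewrite mulrA -kM // ?above // ltW.
  have E2 : a + k l p * k p r * b = 1.
    rewrite -(wgt l lA) (bigID (fun y => c y < c p)) /= /b big_distrr; congr (_ + _).
    rewrite big_seq_cond [RHS]big_seq_cond; apply: eq_bigr => y /andP [yA yl].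
    rewrite /= mulrA -klr -(@kM l r y) //; first exact: le_trans (ltW lp) (ltW pr).
    exact: above.
  have E3 : k l p * k p r * a + b = 1.
    rewrite -(wgt r rA) (bigID (fun y => c y < c p)) /= /a big_distrr; congr (_ + _).
    rewrite big_seq_cond [RHS]big_seq_cond; apply: eq_bigr => y /andP [yA yl].
    rewrite /= mulrA -klr (kfC t l r) -(@kM' r l y) //; first exact: lmax.
    exact: le_trans (ltW lp) (ltW pr).
  have q1 := k_gt0 l p; have q1' : k l p < 1 by apply: k_lt1; apply: contraNneq pA => <-.
  have q2 := k_gt0 p r; have q2' := k_le1 p r.
  have Q1 : k l p * k p r < 1.
    by nra.
  have ab : a = b.
    have : (a - b) * (1 - k l p * k p r) = 0 by rewrite mulrBr mulr1; lra.
    by move/eqP; rewrite mulf_eq0 subr_eq0 => /orP [/eqP //|]; rewrite subr_eq0 => /eqP e; lra.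
  rewrite E1 -ab; rewrite -ab in E2.
  have nz : 1 + k l p * k p r != 0.
    by apply: lt0r_neq0; apply: ltr_wpDr => //; exact: mulr_ge0 (ltW _) (ltW _).
  have a1 : a = 1 / (1 + k l p * k p r).
    have -> : a = (a + k l p * k p r * a) / (1 + k l p * k p r) by field.
    by rewrite E2.
  by rewrite a1; field.
- case: hlo => lA lp lmax.
  rewrite mulr0 addr0 addr0 divr1 -[RHS]mulr1 -(wgt l lA) big_distrr /=.
  apply: eq_big_seq => y yA; rewrite mulrA (kfC t l) -kM' //; last exact: ltW.
  apply: lmax => //; move: (lt_or_gt (yp y yA)); by rewrite (negbTE (hhi y yA)) orbF.
- case: hhi => rA pr rmin.
  rewrite mul0r add0r addr0 divr1 -[RHS]mulr1 -(wgt r rA) big_distrr /=.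
  apply: eq_big_seq => y yA; rewrite mulrA -kM //; first exact: ltW.
  apply: rmin => //; move: (lt_or_gt (yp y yA)); by rewrite (negbTE (hlo y yA)).
- rewrite mulr0 addr0 mul0r big1_seq // => y /andP [_ yA].
  by move: (lt_or_gt (yp y yA)); rewrite (negbTE (hlo y yA)) (negbTE (hhi y yA)).
Qed.


Lemma ind_sum (A : {fset pt}) p (o : option pt) (al : R) (F : pt -> R) : p \notin A ->
  (forall l, o = Some l -> l \in A) -> (o = None -> al = 0) ->
  \sum_(y <- A) F y * ((y == odflt p o)%:R * al) = al * F (odflt p o).
Proof.
move=> pA lA al0; case: o lA al0 => [l|] lA al0 /=.
  rewrite (big_fsetD1 l) ?lA //= eqxx mul1r big1_seq ?addr0 1?mulrC //.
  by move=> y /andP [_]; rewrite in_fsetD1 => /andP [/negbTE -> _]; rewrite mul0r mulr0.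
rewrite al0 // mul0r big1_seq // => y /andP [_ yA].
by rewrite mulr0 mulr0.
Qed.

Lemma ins_weight (A : {fset pt}) p w lo hi : p \notin A -> isLo A p lo -> isHi A p hi ->
  (forall x, x \in A -> \sum_(y <- A) k x y * w y = 1) ->
  exists w' : pt -> R,
    (forall x, x \in (p |` A)%fset -> \sum_(y <- (p |` A)%fset) k x y * w' y = 1) /\
    \sum_(y <- (p |` A)%fset) w' y = \sum_(y <- A) w y + hq (ql lo p) (qr p hi).
Proof.
move=> pA hlo hhi wgt.
have yp : forall y, y \in A -> y != p by move=> y yA; apply: contraNneq pA => <-.
have sP := sumP pA hlo hhi wgt.
set q1 := ql lo p in sP *; set q2 := qr p hi in sP *.
have q1ge : 0 <= q1 := ql_ge0 lo p. have q2ge : 0 <= q2 := qr_ge0 hi p.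
have q1le : q1 <= 1 := ql_le1 lo p. have q2le : q2 <= 1 := qr_le1 hi p.
have n1 : 1 + q1 != 0 by apply: lt0r_neq0; lra.
have n2 : 1 + q2 != 0 by apply: lt0r_neq0; lra.
have nQ : 1 + q1 * q2 != 0 by apply: lt0r_neq0; have := mulr_ge0 q1ge q2ge; lra.
pose be := (1 - q1 * q2) / ((1 + q1) * (1 + q2)).
pose al := - (q1 * (1 - q2)) / ((1 + q1) * (1 + q1 * q2)).
pose ga := - (q2 * (1 - q1)) / ((1 + q2) * (1 + q1 * q2)).
pose l0 := odflt p lo. pose r0 := odflt p hi.
pose w' y := if y == p then be else w y + (y == l0)%:R * al + (y == r0)%:R * ga.
have al0 : lo = None -> al = 0 by move=> E; rewrite /al /q1 E /= !mul0r oppr0 mul0r.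
have ga0 : hi = None -> ga = 0 by move=> E; rewrite /ga /q2 E /= !mul0r oppr0 mul0r.
have hl : forall F : pt -> R, \sum_(y <- A) F y * ((y == l0)%:R * al) = al * F l0.
  move=> F; apply: ind_sum => // l E; by move: hlo; rewrite E => -[].
have hr : forall F : pt -> R, \sum_(y <- A) F y * ((y == r0)%:R * ga) = ga * F r0.
  move=> F; apply: ind_sum => // l E; by move: hhi; rewrite E => -[].
have sA : forall F : pt -> R, \sum_(y <- A) F y * w' y =
    \sum_(y <- A) F y * w y + al * F l0 + ga * F r0.
  move=> F; rewrite -hl -hr -!big_split /=; apply: eq_big_seq => y yA.
  by rewrite /w' (negbTE (yp y yA)) !mulrDr.
exists w'; split; last first.
  rewrite big_fsetU1 //= /w' eqxx.
  have e := sA (fun _ => 1).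
  have E1 : \sum_(y <- A) w' y = \sum_(y <- A) (fun _ => 1) y * w' y.
    by apply: eq_bigr => y _; rewrite mul1r.
  have E2 : \sum_(y <- A) w y = \sum_(y <- A) (fun _ => 1) y * w y.
    by apply: eq_bigr => y _; rewrite mul1r.
  rewrite E1 e -E2 !mulr1 /hq /al /be /ga; field.
  by rewrite n1 n2 nQ.
move=> x; rewrite !inE => /orP [/eqP ->|xA].
  rewrite big_fsetU1 //= sA sP kf_id /w' eqxx mul1r.
  have -> : al * k p l0 = al * q1.
    rewrite /l0 /q1; case E: lo => [l|] /=; first by rewrite kfC.
    by rewrite al0 // !mul0r.
  have -> : ga * k p r0 = ga * q2.
    rewrite /r0 /q2; case E: hi => [r|] //=.
    by rewrite ga0 // !mul0r.
  rewrite /al /be /ga; field.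
  by rewrite n1 n2 nQ.
rewrite big_fsetU1 //= sA wgt // /w' eqxx.
case/orP: (lt_or_gt (yp x xA)) => xp.
  case E: lo hlo => [l|] hlo; last by move: (hlo x xA); rewrite xp.
  case: hlo => lA lp lmax; have xl := lmax x xA xp.
  have e1 : k x p = k x l * q1 by rewrite /q1 E /=; apply: kM => //; exact: ltW.
  have -> : l0 = l by rewrite /l0 E.
  rewrite e1.
  case E2: hi hhi => [r|] hhi.
    case: hhi => rA pr rmin.
    have -> : r0 = r by rewrite /r0 E2.
    have e2 : k x r = k x l * (q1 * q2).
      have klr : k l r = k l p * k p r by apply: kM; exact: ltW.
      have kxr : k x r = k x l * k l r by apply: kM => //; exact: le_trans (ltW lp) (ltW pr).
      by rewrite /q1 /q2 E E2 /= kxr klr.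
    rewrite e2 /be /al /ga; field; by rewrite n1 n2 nQ.
  have q20 : q2 = 0 by rewrite /q2 E2.
  rewrite ga0 // /be /al q20; field; by rewrite n1.
case E2: hi hhi => [r|] hhi; last by move: (hhi x xA); rewrite xp.
case: hhi => rA pr rmin; have rx := rmin x xA xp.
have e1 : k x p = k x r * q2 by rewrite /q2 E2 /= (kfC t p r); apply: kM' => //; exact: ltW.
have -> : r0 = r by rewrite /r0 E2.
rewrite e1.
case E: lo hlo => [l|] hlo.
  case: hlo => lA lp lmax.
  have -> : l0 = l by rewrite /l0 E.
  have e2 : k x l = k x r * (q1 * q2).
    have klr : k r l = k r p * k p l by apply: kM'; exact: ltW.
    have kxr : k x l = k x r * k r l by apply: kM' => //; exact: le_trans (ltW lp) (ltW pr).
    by rewrite /q1 /q2 E E2 /= kxr klr (kfC t r p) (kfC t p l) (mulrC (k p r)).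
  rewrite e2 /be /al /ga; field; by rewrite n1 n2 nQ.
have q10 : q1 = 0 by rewrite /q1 E.
rewrite al0 // /be /ga q10; field; by rewrite n2.
Qed.


Lemma weight_n (n : nat) (A : {fset pt}) : #|` A| = n ->
  exists w : pt -> R, forall x, x \in A -> \sum_(y <- A) k x y * w y = 1.
Proof.
elim: n A => [|n IH] A cA.
  by exists (fun _ => 0) => x; rewrite (cardfs0_eq cA) inE.
have A0 : A != fset0 by apply/eqP => e; move: cA; rewrite e cardfs0.
have [a aA _] := exMax A0.
have cA' : #|` (A `\ a)%fset| = n by move: cA; rewrite (cardfsD1 a) aA add1n => -[].
have [w hw] := IH _ cA'.
have [lo hlo] := exLo (A `\ a)%fset a.
have [hi hhi] := exHi (A `\ a)%fset a.
have aA' : a \notin (A `\ a)%fset by rewrite in_fsetD1 eqxx.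
have [w' [hw' _]] := ins_weight aA' hlo hhi hw.
by exists w'; rewrite -(fsetD1K aA).
Qed.

Lemma Mag_ins (A : {fset pt}) p lo hi : p \notin A -> isLo A p lo -> isHi A p hi ->
  Mag t (p |` A)%fset = Mag t A + hq (ql lo p) (qr p hi).
Proof.
move=> pA hlo hhi.
have [w hw] := weight_n (erefl #|` A|).
have [w' [hw' s']] := ins_weight pA hlo hhi hw.
by rewrite (Mag_weight (ker (A := _)) hw') (Mag_weight (ker (A := _)) hw).
Qed.

Lemma hq_mono a b q : 0 <= b -> b <= a -> a <= 1 -> 0 <= q -> q <= 1 -> hq a q <= hq b q.
Proof.
move=> b0 ba a1 q0 q1.
have a0 : 0 <= a by apply: le_trans ba.
have -> : hq a q = hq b q - 2 * (a - b) * (1 - q) * (1 - a * b * q) /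
   ((1 + a) * (1 + b) * (1 + a * q) * (1 + b * q)).
  rewrite /hq; field.
  have h1 : 0 < 1 + a by lra. have h2 : 0 < 1 + b by lra.
  have h3 : 0 < 1 + a * q by have := mulr_ge0 a0 q0; lra.
  have h4 : 0 < 1 + b * q by have := mulr_ge0 b0 q0; lra.
  have h5 : 0 < 1 + a * b by have := mulr_ge0 a0 b0; lra.
  have h6 : 0 < 1 + q by lra.
  by rewrite (lt0r_neq0 h1) (lt0r_neq0 h2) (lt0r_neq0 h3) (lt0r_neq0 h4) (lt0r_neq0 h6).
rewrite lerBlDr lerDl; apply: divr_ge0.
  apply: mulr_ge0; [apply: mulr_ge0; [apply: mulr_ge0 => //; lra | lra] |].
  have : a * b * q <= 1.
    have h : a * b <= 1 by apply: mulr_ile1 => //; lra.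
    by apply: mulr_ile1 => //; apply: mulr_ge0.
  lra.
apply: mulr_ge0; [apply: mulr_ge0; [apply: mulr_ge0|]|]; try lra.
  by have := mulr_ge0 a0 q0; lra.
by have := mulr_ge0 b0 q0; lra.
Qed.

Lemma hqC a b : hq a b = hq b a.
Proof. by rewrite /hq (mulrC b a) (addrC (2 / (1 + b))). Qed.

Lemma hq_ge0 a b : 0 <= a -> a <= 1 -> 0 <= b -> b <= 1 -> 0 <= hq a b.
Proof.
move=> a0 a1 b0 b1.
have e : hq 1 1 = 0 by rewrite /hq mulr1; field.
have s1 : hq 1 1 <= hq b 1 by apply: hq_mono.
have s2 : hq 1 b <= hq a b by apply: hq_mono.
have := hqC b 1; lra.
Qed.


Lemma Mag_mono1 (A : {fset pt}) p : p \notin A -> Mag t A <= Mag t (p |` A)%fset.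
Proof.
move=> pA; have [lo hlo] := exLo A p; have [hi hhi] := exHi A p.
rewrite (Mag_ins pA hlo hhi) lerDl; apply: hq_ge0.
- exact: ql_ge0.
- exact: ql_le1.
- exact: qr_ge0.
- exact: qr_le1.
Qed.

Lemma ql_sub (S T : {fset pt}) p oS oT : (S `<=` T)%fset -> isLo S p oS -> isLo T p oT ->
  ql oS p <= ql oT p.
Proof.
move=> /fsubsetP ST; case: oS => [l [lS lp _]|_] hT /=; last exact: ql_ge0.
case: oT hT => [l' [l'T l'p lmax]|] /=; last by move=> h; move: (h l (ST _ lS)); rewrite lp.
have ll' : c l <= c l' by apply: lmax => //; exact: ST.
rewrite (@kM l l' p) //; last exact: ltW.
by rewrite ger_pMl ?k_gt0 ?k_le1.
Qed.

Lemma qr_sub (S T : {fset pt}) p oS oT : (S `<=` T)%fset -> isHi S p oS -> isHi T p oT ->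
  qr p oS <= qr p oT.
Proof.
move=> /fsubsetP ST; case: oS => [r [rS pr _]|_] hT /=; last exact: qr_ge0.
case: oT hT => [r' [r'T pr' rmin]|] /=; last by move=> h; move: (h r (ST _ rS)); rewrite pr.
have rr' : c r' <= c r by apply: rmin => //; exact: ST.
rewrite (@kM p r' r) //; last exact: ltW.
by rewrite ger_pMr ?k_gt0 ?k_le1.
Qed.

Lemma Mag_DR (S T : {fset pt}) p : (S `<=` T)%fset -> p \notin T ->
  Mag t (p |` T)%fset - Mag t T <= Mag t (p |` S)%fset - Mag t S.
Proof.
move=> ST pT.
have pS : p \notin S by apply: contra pT; apply: (fsubsetP ST).
have [loS hloS] := exLo S p; have [hiS hhiS] := exHi S p.
have [loT hloT] := exLo T p; have [hiT hhiT] := exHi T p.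
rewrite (Mag_ins pT hloT hhiT) (Mag_ins pS hloS hhiS) addrAC subrr add0r addrAC subrr add0r.
have l1 := ql_sub ST hloS hloT; have r1 := qr_sub ST hhiS hhiT.
apply: (@le_trans _ _ (hq (ql loS p) (qr p hiT))).
  apply: hq_mono => //.
  - exact: ql_ge0.
  - exact: ql_le1.
  - exact: qr_ge0.
  - exact: qr_le1.
rewrite hqC [X in _ <= X]hqC; apply: hq_mono => //.
- exact: qr_ge0.
- exact: qr_le1.
- exact: ql_ge0.
- exact: ql_le1.
Qed.

End Line.

End LineM.
Export LineM.

Module TriM.
Section Submod.
Variables (R : realType) (K : choiceType) (F : {fset K} -> R).
Hypothesis Fmono1 : forall A p, p \notin A -> F A <= F (p |` A)%fset.
Hypothesis FDR : forall (S T : {fset K}) p, (S `<=` T)%fset -> p \notin T ->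
  F (p |` T)%fset - F T <= F (p |` S)%fset - F S.

Lemma chain (C : {fset K}) : forall A S : {fset K}, (forall x, x \in C -> x \notin A) ->
  (S `<=` A)%fset -> F (A `|` C)%fset - F A <= F (S `|` C)%fset - F S.
Proof.
elim/fset1U_rect: C => [|p C pC IH] A S dis SA.
  by rewrite !fsetU0 !subrr.
have pA : p \notin A by apply: dis; rewrite !inE eqxx.
have dis' : forall x, x \in C -> x \notin A by move=> x xC; apply: dis; rewrite !inE xC orbT.
have e1 : (A `|` (p |` C))%fset = (p |` (A `|` C))%fset.
  by apply/fsetP => x; rewrite !inE; case: (x \in A); case: (x == p).
have e2 : (S `|` (p |` C))%fset = (p |` (S `|` C))%fset.
  by apply/fsetP => x; rewrite !inE; case: (x \in S); case: (x == p).
rewrite e1 e2.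
have h1 := IH A S dis' SA.
have h2 : F (p |` (A `|` C))%fset - F (A `|` C)%fset <= F (p |` (S `|` C))%fset - F (S `|` C)%fset.
  apply: FDR.
    apply/fsubsetP => x; rewrite !inE => /orP [xS|->]; last by rewrite orbT.
    by rewrite (fsubsetP SA x xS).
  by rewrite !inE negb_or pA.
lra.
Qed.

Lemma monoC (C : {fset K}) : forall A : {fset K}, (forall x, x \in C -> x \notin A) ->
  F A <= F (A `|` C)%fset.
Proof.
elim/fset1U_rect: C => [|p C pC IH] A dis; first by rewrite fsetU0.
have pA : p \notin A by apply: dis; rewrite !inE eqxx.
have dis' : forall x, x \in C -> x \notin A by move=> x xC; apply: dis; rewrite !inE xC orbT.
have e1 : (A `|` (p |` C))%fset = (p |` (A `|` C))%fset.
  by apply/fsetP => x; rewrite !inE; case: (x \in A); case: (x == p).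
rewrite e1; apply: le_trans (IH A dis') _; apply: Fmono1.
by rewrite !inE negb_or pA.
Qed.

Lemma monoS (S T : {fset K}) : (S `<=` T)%fset -> F S <= F T.
Proof.
move=> ST.
have -> : T = (S `|` (T `\` S))%fset.
  apply/fsetP => x; rewrite !inE; case xS: (x \in S) => //=.
  by rewrite (fsubsetP ST x xS).
by apply: monoC => x; rewrite !inE => /andP [].
Qed.

Lemma submod (A B : {fset K}) : F (A `|` B)%fset + F (A `&` B)%fset <= F A + F B.
Proof.
have h := @chain (B `\` A)%fset A (A `&` B)%fset.
have e1 : (A `|` (B `\` A))%fset = (A `|` B)%fset.
  by apply/fsetP => x; rewrite !inE; case: (x \in A); case: (x \in B).
have e2 : ((A `&` B) `|` (B `\` A))%fset = B.
  by apply/fsetP => x; rewrite !inE; case: (x \in A); case: (x \in B).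
rewrite e1 e2 in h.
have dis : forall x, x \in (B `\` A)%fset -> x \notin A by move=> x; rewrite !inE => /andP [].
have := h dis (fsubsetIl A B).
lra.
Qed.

Lemma triF (X Y Z : {fset K}) :
  F (X `|` Z)%fset + F Y <= F (X `|` Y)%fset + F (Y `|` Z)%fset.
Proof.
have h := submod (X `|` Y)%fset (Y `|` Z)%fset.
have m1 : F (X `|` Z)%fset <= F ((X `|` Y) `|` (Y `|` Z))%fset.
  apply: monoS; apply/fsubsetP => x; rewrite !inE.
  by case: (x \in X); case: (x \in Y); case: (x \in Z).
have m2 : F Y <= F ((X `|` Y) `&` (Y `|` Z))%fset.
  apply: monoS; apply/fsubsetP => x; rewrite !inE.
  by case: (x \in X); case: (x \in Y); case: (x \in Z).
lra.
Qed.
End Submod.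

Lemma tri1 (R : realType) (t : R) (ht : 0 < t) (X Y Z : {fset 'rV[R]_1}) :
  dMag t X Z <= dMag t X Y + dMag t Y Z.
Proof.
have h := @triF R _ (Mag t) (@Mag_mono1 R t ht) (@Mag_DR R t ht) X Y Z.
rewrite /dMag; lra.
Qed.

End TriM.
Export TriM.

Lemma a_to_b (R : realType) (t : R) (D : nat) (A B : {fset 'rV[R]_D}) :
  dMag t A B <= dMag t A (A `&` B)%fset + dMag t (A `&` B)%fset B ->
  Mag t (A `|` B)%fset + Mag t (A `&` B)%fset <= Mag t A + Mag t B.
Proof.
rewrite /dMag.
have -> : (A `|` (A `&` B))%fset = A by apply/fsetUidPl; exact: fsubsetIl.
have -> : ((A `&` B) `|` B)%fset = B by rewrite fsetUC; apply/fsetUidPl; exact: fsubsetIr.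
lra.
Qed.


End Helpers.
Import Helpers.

Theorem lemmaB6 (R : realType) (t : R) (D : nat) (ht : 0 < t) (hD : (1 <= D)%N) :
  ((forall X Y Z : {fset 'rV[R]_D}, dMag t X Z <= dMag t X Y + dMag t Y Z) <->
   (forall A B : {fset 'rV[R]_D},
      Mag t (A `|` B)%fset + Mag t (A `&` B)%fset <= Mag t A + Mag t B))
  /\
  (exists (D' : nat) (t' : R) (X Y Z : {fset 'rV[R]_D'}),
      (1 <= D')%N /\ 0 < t' /\ dMag t' X Y + dMag t' Y Z < dMag t' X Z).
Proof.
split.
  split; first by move=> h A B; apply: a_to_b; apply: h.
  move=> hb.
  case: D hD hb => [//|[|D]] _ hb.
    move=> X Y Z; exact: tri1.
  have [A [B AB]] := cex ht (isT : (2 <= D.+2)%N).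
  have := hb A B; lra.
have [A [B AB]] := cex (ltr01 : (0:R) < 1) (isT : (2 <= 2)%N).
exists 2%N, 1, A, (A `&` B)%fset, B; split => //; split => //.
have : ~ (dMag 1 A B <= dMag 1 A (A `&` B)%fset + dMag 1 (A `&` B)%fset B).
  by move/a_to_b; lra.
by move/negP; rewrite -ltNge.
Qed.
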